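(* For $b\in B$ and $i\in I$, let $m=\varphi_i(b)$. Then for every $j\ge0$ and $\mu\in P$, $$\sum_{t=0}^m g_j(\tilde f_i^tb,\mu+t\alpha_i)\,q^{tj\delta_{0i}}=\sum_{t=0}^m g_j\bigl(\tilde f_i^tb,\ r_i(\mu+(m-t)\alpha_i)\bigr)\,q^{tj\delta_{0i}}.$$
   Context: Standing setup. $\mathfrak g$ is an affine Kac–Moody algebra with index set $I$ ($0$ the special node), Cartan matrix $(a_{ij})$, simple coroots $h_i$, fundamental weights $\Lambda_i$, null root $\delta$. $P=\bigoplus_{i\in I}\mathbb Z\Lambda_i\oplus\mathbb Z\delta$, $P_{cl}=\bigoplus_{i\in I}\mathbb Z\Lambda_i\subset P$, $cl:P\to P_{cl}$ the projection killing $\delta$. Simple roots are $\alpha_i=\sum_{j}a_{ji}\Lambda_j+\delta_{i0}\delta\in P$, $r_i(\mu)=\mu-\langle h_i,\mu\rangle\alpha_i$. For $\mu\in P$, $(\Lambda_0,\mu)$ denotes the coefficient of $\delta$ in $\mu$. Put $q=e^{-\delta}$. $B$ is a finite crystal with $wt:B\to P_{cl}$, Kashiwara operators $\tilde e_i,\tilde f_i$, $\varepsilon_i(b)=\max\{k:\tilde e_i^kb\ne0\}$, $\varphi_i(b)=\max\{k:\tilde f_i^kb\neq0\}$, $\varphi_i(b)-\varepsilon_i(b)=\langle h_i,wt\,b\rangle$, $wt(\tilde f_ib)=wt(b)-cl(\alpha_i)$. Tensor products: $wt$ is additive; $\tilde e_i(b_1\otimes b_2)=\tilde e_ib_1\otimes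 b_2$ if $\varphi_i(b_1)\ge\varepsilon_i(b_2)$ and $=b_1\otimes\tilde e_ib_2$ otherwise; $\tilde f_i(b_1\otimes b_2)=\tilde f_ib_1\otimes b_2$ if $\varphi_i(b_1)>\varepsilon_i(b_2)$ and $=b_1\otimes\tilde f_ib_2$ otherwise. An energy function is $H:B\otimes B\to\mathbb Z$ such that whenever $\tilde e_i(b\otimes b')\neq0$: $H(\tilde e_i(b\otimes b'))=H(b\otimes b')$ if $i\ne0$; $=H(b\otimes b')+1$ if $i=0$ and $\varphi_0(b)\ge\varepsilon_0(b')$; $=H(b\otimes b')-1$ if $i=0$ and $\varphi_0(b)<\varepsilon_0(b')$. For $j\ge0$, $b\in B$, $\mu\in P$: $\mathcal P_j(b,\mu)=\{b\otimes b_j\otimes\cdots\otimes b_1\in B^{\otimes(j+1)}:wt(b_j)+\cdots+wt(b_1)=cl(\mu)\}$, $E(b_{j+1}\otimes\cdots\otimes b_1)=\sum_{i=1}^j iH(b_{i+1}\otimes b_i)$, and $g_j(b,\mu)=q^{(\Lambda_0,\mu)}\sum_{p\in\mathcal P_j(b,\mu)}q^{E(p)}$. *)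

(* Defs.v *)
From HB Require Import structures.
From mathcomp Require Import all_boot all_order all_algebra.
Set Implicit Arguments. Unset Strict Implicit. Unset Printing Implicit Defensive.
Import Order.TTheory GRing.Theory Num.Theory.
Local Open Scope ring_scope.

(* The weight lattice P = (+)_i Z Lambda_i (+) Z delta, an element being
   (coefficients of the Lambda_i, coefficient of delta). *)
Notation wlat I := ({ffun I -> int} * int)%type.

Section Affine.
Variable I : finType.

(* Affine generalized Cartan matrix (a i j = a_{ij}): GCM conditions,
   indecomposability, and a positive null vector (Kac, Thm 4.3). *)
Definition affine_cartan (a : I -> I -> int) : Prop :=
  [/\ forall i, a i i = 2,
      forall i j, i != j -> a i j <= 0,
      forall i j, a i j = 0 <-> a j i = 0,
      (forall J : {set I}, J != set0 -> J != setT ->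
          exists i, exists j, [/\ i \in J, j \notin J & a i j != 0])
    & exists u : I -> nat, (forall i, (0 < u i)%N) /\
          (forall i, \sum_(k : I) a i k * (u k)%:Z = 0)].

Definition cl (mu : wlat I) : {ffun I -> int} := mu.1.
(* (Lambda_0, mu) = coefficient of delta *)
Definition delta_coef (mu : wlat I) : int := mu.2.
Definition pair_h (i : I) (mu : wlat I) : int := mu.1 i.
Definition alpha (i0 : I) (a : I -> I -> int) (i : I) : wlat I :=
  ([ffun j => a j i], if i == i0 then 1 else 0).
Definition refl (i0 : I) (a : I -> I -> int) (i : I) (mu : wlat I) : wlat I :=
  mu - alpha i0 a i *~ pair_h i mu.

Variable B : finType.

(* k-fold application of a partial Kashiwara operator (None = 0) *)
Definition kpow (op : I -> B -> option B) (i : I) (k : nat) (b : B) : option B :=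
  iter k (obind (op i)) (Some b).

Definition is_crystal (i0 : I) (a : I -> I -> int) (wt : B -> {ffun I -> int})
  (e f : I -> B -> option B) (eps phi : I -> B -> nat) : Prop :=
  [/\ forall i b b', f i b = Some b' <-> e i b' = Some b,
      forall i b b', f i b = Some b' -> wt b' = wt b - cl (alpha i0 a i),
      forall i b k, (k <= eps i b)%N <-> kpow e i k b <> None,
      forall i b k, (k <= phi i b)%N <-> kpow f i k b <> None
    & forall i b, (phi i b)%:Z - (eps i b)%:Z = wt b i].

Definition e2 (e : I -> B -> option B) (eps phi : I -> B -> nat) (i : I)
  (b1 b2 : B) : option (B * B) :=
  if (eps i b2 <= phi i b1)%N then omap (fun x => (x, b2)) (e i b1)
  else omap (fun x => (b1, x)) (e i b2).

Definition energy_function (i0 : I) (e : I -> B -> option B)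
  (eps phi : I -> B -> nat) (H : B -> B -> int) : Prop :=
  forall i b b' p, e2 e eps phi i b b' = Some p ->
    H p.1 p.2 = H b b' +
      (if i == i0 then (if (eps i b' <= phi i b)%N then 1 else -1) else 0).

(* for s = (b_1, ..., b_j) (s k = b_{k+1}) and b = b_{j+1}:
   the (nat-indexed from 0) chain c_k = b_{k+1}, c_j = b *)
Definition chain (j : nat) (s : {ffun 'I_j -> B}) (b : B) (n : nat) : B :=
  if insub n is Some k then s k else b.

Definition energyE (H : B -> B -> int) (j : nat) (b : B)
  (s : {ffun 'I_j -> B}) : int :=
  \sum_(k < j) (k.+1)%:Z * H (chain s b k.+1) (chain s b k).

Definition gfun (R : unitRingType) (q : R) (wt : B -> {ffun I -> int})
  (H : B -> B -> int) (j : nat) (b : B) (mu : wlat I) : R :=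
  q ^ delta_coef mu *
  \sum_(s : {ffun 'I_j -> B} | \sum_(k < j) wt (s k) == cl mu) q ^ energyE H b s.

Definition gopt (R : unitRingType) (q : R) (wt : B -> {ffun I -> int})
  (H : B -> B -> int) (j : nat) (ob : option B) (mu : wlat I) : R :=
  if ob is Some b then gfun q wt H j b mu else 0.

End Affine.

(* The formal variable q = e^{-delta}, in the field of rational functions
   Q(q) ⊇ Z[q, q^-1] *)
Definition LaurentF := {fraction {poly int}}.
Definition qvar : LaurentF := FracField.tofrac ('X : {poly int}).

(* Main.v *)
Require Import Defs.
From HB Require Import structures.
From mathcomp Require Import all_boot all_order all_algebra.
From mathcomp Require Import zify ring lra.
Set Implicit Arguments. Unset Strict Implicit. Unset Printing Implicit Defensive.
Import Order.TTheory GRing.Theory Num.Theory.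
Local Open Scope ring_scope.

Lemma fst_mulz (I : finType) (x : wlat I) z : (x *~ z).1 = x.1 *~ z.
Proof. exact: (raddfMz fst). Qed.
Lemma snd_mulz (I : finType) (x : wlat I) z : (x *~ z).2 = x.2 *~ z.
Proof. exact: (raddfMz snd). Qed.

Lemma ffDE (I : finType) (g h : {ffun I -> int}) x : (g + h) x = g x + h x.
Proof. by rewrite ffunE. Qed.
Lemma ffNE (I : finType) (g : {ffun I -> int}) x : (- g) x = - g x.
Proof. by rewrite ffunE. Qed.
Lemma ffBE (I : finType) (g h : {ffun I -> int}) x : (g - h) x = g x - h x.
Proof. by rewrite ffDE ffNE. Qed.

Lemma alg (I : finType) (i : I) (S S' M v : {ffun I -> int}) (h D t t' m : int)
  (vi : v i = 2) (hMi : M i = h) (eD : D = S i + m - 2 * t)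
  (hS' : forall x, S' x = S x + v x * (t' - t - D)) :
  ((S == M + v *~ t) = (S' == M + v *~ (m - t') - v *~ (h + 2 * (m - t'))))
  /\ (S == M + v *~ t -> D = h + m).
Proof.
have LD : S = M + v *~ t -> D = h + m.
  move=> /(congr1 (fun F : {ffun I -> int} => F i)).
  rewrite ffDE ffunMzE mulrzz vi hMi eD => ->; ring.
have RD : S' = M + v *~ (m - t') - v *~ (h + 2 * (m - t')) -> D = h + m.
  move=> /(congr1 (fun F : {ffun I -> int} => F i)).
  rewrite hS' ffBE ffDE !ffunMzE !mulrzz vi hMi eD => e2; lia.
split; last by move/eqP.
apply/idP/idP => /eqP hh; apply/eqP.
  have hD := LD hh; apply/ffunP => x.
  rewrite hS' hh hD ffBE !ffDE !ffunMzE !mulrzz; ring.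
have hD := RD hh; apply/ffunP => x.
have e2 := hS' x; rewrite hh hD ffBE !ffDE !ffunMzE !mulrzz in e2.
rewrite ffDE ffunMzE mulrzz.
have -> : S x = S' x - v x * (t' - t - (h + m)) by rewrite hS' hD; ring.
rewrite hh ffBE !ffDE !ffunMzE !mulrzz; ring.
Qed.

Lemma sndD (I : finType) (x y : wlat I) : (x + y).2 = x.2 + y.2. Proof. by []. Qed.
Lemma sndB (I : finType) (x y : wlat I) : (x - y).2 = x.2 - y.2. Proof. by []. Qed.
Lemma fstD (I : finType) (x y : wlat I) : (x + y).1 = x.1 + y.1. Proof. by []. Qed.

Section Main.
Variables (I : finType) (i0 : I) (a : I -> I -> int) (B : finType)
  (wt : B -> {ffun I -> int}) (e f : I -> B -> option B)
  (eps phi : I -> B -> nat) (H : B -> B -> int).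
Hypothesis Hcr : is_crystal i0 a wt e f eps phi.
Hypothesis Hen : energy_function i0 e eps phi H.
Variable i : I.

Lemma kpowSr (op : I -> B -> option B) k x y : op i x = Some y -> kpow op i k.+1 x = kpow op i k y.
Proof. by move=> h; rewrite /kpow iterSr /= h. Qed.

Lemma kpowS (op : I -> B -> option B) k x : kpow op i k.+1 x = obind (op i) (kpow op i k x).
Proof. by []. Qed.

Lemma fe x y : f i x = Some y <-> e i y = Some x.
Proof. by case: Hcr => h _ _ _ _; apply: h. Qed.

Lemma le_phi x k : (k <= phi i x)%N <-> kpow f i k x <> None.
Proof. by case: Hcr => _ _ _ h _; apply: h. Qed.

Lemma le_eps x k : (k <= eps i x)%N <-> kpow e i k x <> None.
Proof. by case: Hcr => _ _ h _ _; apply: h. Qed.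

Lemma f_phi x y : f i x = Some y -> phi i y = (phi i x).-1 /\ (0 < phi i x)%N.
Proof.
move=> h.
have E k : (k <= phi i y)%N <-> (k.+1 <= phi i x)%N.
  by rewrite le_phi le_phi (kpowSr _ h).
have h1 := proj1 (E _) (leqnn _).
have h2 := proj2 (E ((phi i x).-1)).
split; last by move: (proj1 (E 0%N) isT).
have : ((phi i x).-1 <= phi i y)%N by apply: h2; lia.
lia.
Qed.

Lemma f_eps x y : f i x = Some y -> eps i y = (eps i x).+1.
Proof.
move=> /fe h.
have E k : (k.+1 <= eps i y)%N <-> (k <= eps i x)%N.
  by rewrite le_eps le_eps (kpowSr _ h).
have h2 := proj2 (E (eps i x)) (leqnn _).
have h1 : ((eps i y).-1 <= eps i x)%N by apply: (proj1 (E _)); lia.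
lia.
Qed.

Lemma f_some x : f i x <> None <-> (0 < phi i x)%N.
Proof. by rewrite le_phi. Qed.

Lemma e_some x : e i x <> None <-> (0 < eps i x)%N.
Proof. by rewrite le_eps. Qed.

Lemma f_wt x y : f i x = Some y -> wt y = wt x - cl (alpha i0 a i).
Proof. by case: Hcr => _ h _ _ _; apply: h. Qed.

Lemma wt_i x : (phi i x)%:Z - (eps i x)%:Z = wt x i.
Proof. by case: Hcr => _ _ _ _ h; apply: h. Qed.


Variables (N : nat) (d0 : B).
Notation path := {ffun 'I_N -> B}.

Definition get (c : path) (k : nat) : B := odflt d0 (omap c (insub k : option 'I_N)).
Definition set (c : path) (k : nat) (x : B) : path :=
  [ffun o : 'I_N => if nat_of_ord o == k then x else c o].

Lemma get_ord c (o : 'I_N) : get c o = c o.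
Proof. by rewrite /get valK. Qed.

Lemma get_set_ne c k l x : l != k -> get (set c k x) l = get c l.
Proof.
rewrite /get; case: insubP => //= o _ <- ne; by rewrite ffunE (negbTE ne).
Qed.

Lemma get_set_eq c k x : (k < N)%N -> get (set c k x) k = x.
Proof. by move=> lt; rewrite (_ : k = Ordinal lt) // get_ord ffunE eqxx. Qed.

Lemma set_set c k x y : set (set c k x) k y = set c k y.
Proof. by apply/ffunP => o; rewrite !ffunE; case: eqP. Qed.

Lemma set_get c k : set c k (get c k) = c.
Proof. by apply/ffunP => o; rewrite !ffunE; case: eqP => // <-; rewrite get_ord. Qed.

Notation ep := (eps i).
Notation ph := (phi i).

Fixpoint epsP n c : nat :=
  if n is n'.+1 then (ep (get c n') + (epsP n' c - ph (get c n')))%N else 0%N.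
Fixpoint phiP n c : nat :=
  if n is n'.+1 then (phiP n' c + (ph (get c n') - epsP n' c))%N else 0%N.
Fixpoint fP n c : option path :=
  if n is n'.+1 then
    if (epsP n' c < ph (get c n'))%N then omap (set c n') (f i (get c n'))
    else fP n' c
  else None.
Fixpoint eP n c : option path :=
  if n is n'.+1 then
    if (epsP n' c <= ph (get c n'))%N then omap (set c n') (e i (get c n'))
    else eP n' c
  else None.

Lemma epsP_ext n c c' : (forall l, (l < n)%N -> get c l = get c' l) ->
  epsP n c = epsP n c' /\ phiP n c = phiP n c'.
Proof.
elim: n => [//|n IH] h /=.
have [-> ->] := IH (fun l lt => h l (ltnW lt)).
by rewrite h.
Qed.

Lemma fP_frame n c c' : fP n c = Some c' -> forall l, (n <= l)%N -> get c' l = get c l.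
Proof.
elim: n c' => [//|n IH] c' /=.
case: ifP => _.
  case: (f i (get c n)) => //= x [<-] l lt; rewrite get_set_ne //; lia.
by move=> h l lt; apply: IH => //; lia.
Qed.

Lemma eP_frame n c c' : eP n c = Some c' -> forall l, (n <= l)%N -> get c' l = get c l.
Proof.
elim: n c' => [//|n IH] c' /=.
case: ifP => _.
  case: (e i (get c n)) => //= x [<-] l lt; rewrite get_set_ne //; lia.
by move=> h l lt; apply: IH => //; lia.
Qed.


Lemma set_ext n c x : forall l, (l < n)%N -> get (set c n x) l = get c l.
Proof. by move=> l lt; rewrite get_set_ne // neq_ltn lt. Qed.

Lemma fP_spec n c c' : (n <= N)%N -> fP n c = Some c' ->
  [/\ eP n c' = Some c, epsP n c' = (epsP n c).+1,
      phiP n c' = (phiP n c).-1 & (0 < phiP n c)%N].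
Proof.
elim: n c' => [//|n IH] c' hn /=.
case: ifP => hc.
  case hx: (f i (get c n)) => [x|] //= [<-].
  have [ph_x ph_pos] := f_phi hx; have ep_x := f_eps hx; have ex := proj1 (fe _ _) hx.
  have [-> ->] := epsP_ext (set_ext c x (n:=n)).
  rewrite get_set_eq // ph_x ep_x ifT; last by lia.
  rewrite ex /= set_set set_get; split => //; lia.
move=> h; have [IH1 IH2 IH3 IH4] := IH c' (ltnW hn) h.
rewrite (fP_frame h (leqnn n)) IH2 IH3 ifF; last by lia.
rewrite IH1; split => //; lia.
Qed.

Lemma eP_spec n c c' : (n <= N)%N -> eP n c = Some c' ->
  [/\ fP n c' = Some c, epsP n c' = (epsP n c).-1,
      phiP n c' = (phiP n c).+1 & (0 < epsP n c)%N].
Proof.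
elim: n c' => [//|n IH] c' hn /=.
case: ifP => hc.
  case hx: (e i (get c n)) => [x|] //= [<-].
  have fx := proj2 (fe _ _) hx.
  have [ph_x ph_pos] := f_phi fx; have ep_x := f_eps fx.
  have [-> ->] := epsP_ext (set_ext c x (n:=n)).
  rewrite get_set_eq // ifT; last by lia.
  rewrite fx /= set_set set_get; split => //; lia.
move=> h; have [IH1 IH2 IH3 IH4] := IH c' (ltnW hn) h.
rewrite (eP_frame h (leqnn n)) IH2 IH3 ifF; last by lia.
rewrite IH1; split => //; lia.
Qed.

Lemma fP_some n c : (0 < phiP n c)%N -> fP n c <> None.
Proof.
elim: n => [//|n IH] /=.
case: ifP => hc hp.
  case hx: (f i (get c n)) => [x|] //=.
  move=> _; have h := proj2 (f_some (get c n)); rewrite hx in h; apply: h => //; lia.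
by apply: IH; lia.
Qed.

Lemma eP_some n c : (0 < epsP n c)%N -> eP n c <> None.
Proof.
elim: n => [//|n IH] /=.
case: ifP => hc hp.
  case hx: (e i (get c n)) => [x|] //=.
  move=> _; have h := proj2 (e_some (get c n)); rewrite hx in h; apply: h => //; lia.
by apply: IH; lia.
Qed.


Definition Epath n c : int :=
  \sum_(k < n.-1) (k.+1)%:Z * H (get c k.+1) (get c k).

Lemma Epath_ext n c c' : (forall l, (l < n)%N -> get c l = get c' l) ->
  Epath n c = Epath n c'.
Proof.
move=> h; apply: eq_bigr => k _; rewrite !h //; case: k => k /=; lia.
Qed.

Lemma EpathS n c : Epath n.+2 c = Epath n.+1 c + (n.+1)%:Z * H (get c n.+1) (get c n).
Proof. by rewrite /Epath big_ord_recr. Qed.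

Lemma fP_energy n c c' : (n < N)%N -> fP n.+1 c = Some c' ->
  Epath n.+1 c' = Epath n.+1 c +
    (if i == i0 then (if (epsP n c < ph (get c n))%N then - (n%:Z) else 1) else 0).
Proof.
elim: n c' => [|n IH] c' hn.
  rewrite /=; case: ifP => // hc _.
  by rewrite /Epath !big_ord0; case: (i == i0); rewrite ?add0r.
move=> h; move: (h); rewrite [fP _ c]/=.
case: ifP => hc.
  case hx: (f i (get c n.+1)) => [x|] //= [<-].
  have [ph_x ph_pos] := f_phi hx; have ex := proj1 (fe _ _) hx.
  rewrite !EpathS (Epath_ext (set_ext c x (n:=n.+1))) get_set_eq //.
  rewrite get_set_ne; last by rewrite neq_ltn ltnSn.
  have := Hen (p := (get c n.+1, get c n)) (b := x) (b' := get c n) (i := i).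
  rewrite /e2 ifT; last by lia.
  rewrite ex => /(_ erefl) /= ->.
  have -> : (ep (get c n) <= ph x)%N by lia.
  case: (i == i0); rewrite ?addr0 ?mulr0; ring.
move=> h'; have {}h' : fP n.+1 c = Some c' := h'.
have IHc := IH c' (ltnW hn) h'.
rewrite !EpathS IHc (fP_frame h' (leqnn _)).
case: (boolP (epsP n c < ph (get c n))%N) => hc2.
  move: h' => /=; rewrite hc2.
  case hy: (f i (get c n)) => [y|] //= [eq].
  have ep_y := f_eps hy; have ey := proj1 (fe _ _) hy.
  rewrite -eq get_set_eq; last by lia.
  have := Hen (p := (get c n.+1, get c n)) (b := get c n.+1) (b' := y) (i := i).
  rewrite /e2 ifF; last by lia.
  rewrite ey => /(_ erefl) /= ->.
  have -> : (ep y <= ph (get c n.+1))%N = false by lia.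
  case: (i == i0); rewrite ?addr0 ?mulr0; ring.
move: h' => /=; rewrite (negbTE hc2) => h''.
rewrite (fP_frame h'' (leqnn _)).
case: (i == i0); rewrite ?addr0; ring.
Qed.

Lemma fP_head n c c' : (n < N)%N -> fP n.+1 c = Some c' ->
  ep (get c' n) = (ep (get c n) + (epsP n c < ph (get c n)))%N.
Proof.
move=> hn /=; case: ifP => hc.
  case hx: (f i (get c n)) => [x|] //= [<-].
  by rewrite get_set_eq // (f_eps hx) addn1.
by move=> h; rewrite (fP_frame h (leqnn _)) addn0.
Qed.


Definition wtP (c : path) : {ffun I -> int} := \sum_(o : 'I_N) wt (c o).

Lemma fP_shape n c c' : fP n c = Some c' ->
  exists k y, [/\ (k < n)%N, f i (get c k) = Some y & c' = set c k y].
Proof.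
elim: n => [//|n IH] /=; case: ifP => _.
  case hx: (f i (get c n)) => [x|] //= [<-]; by exists n, x.
by move=> /IH [k [y [lt fy ->]]]; exists k, y; split => //; lia.
Qed.

Lemma fP_wt n c c' : (n <= N)%N -> fP n c = Some c' ->
  wtP c' = wtP c - cl (alpha i0 a i).
Proof.
move=> hn /fP_shape [k [y [lt fy ->]]].
have kN : (k < N)%N by lia.
rewrite /wtP (bigD1 (Ordinal kN)) //= [in RHS](bigD1 (Ordinal kN)) //=.
rewrite ffunE eqxx (f_wt fy) -(get_ord c (Ordinal kN)) /=.
rewrite (eq_bigr (fun o => wt (c o))); last first.
  by move=> o ho; rewrite ffunE; case: eqP => // ho'; move: ho; rewrite -val_eqE /= ho' eqxx.
by rewrite addrAC.
Qed.

Lemma eP_wt n c c' : (n <= N)%N -> eP n c = Some c' ->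
  wtP c' = wtP c + cl (alpha i0 a i).
Proof.
move=> hn h; have [h1 _ _ _] := eP_spec hn h.
by rewrite (fP_wt hn h1) subrK.
Qed.

Lemma phi_eps_wt n c :
  (phiP n c)%:Z - (epsP n c)%:Z = (\sum_(l < n) wt (get c l)) i.
Proof.
elim: n => [|n IH] /=; first by rewrite big_ord0 ffunE.
rewrite big_ord_recr /= ffunE -IH -wt_i.
have h : forall p E : nat, (p - E)%N%:Z - (E - p)%N%:Z = p%:Z - E%:Z.
  move=> p E; lia.
lia.
Qed.

Lemma wtP_get c : \sum_(l < N) wt (get c l) = wtP c.
Proof. by apply: eq_bigr => o _; rewrite get_ord. Qed.


Variables (b : B) (j : nat).
Hypothesis HN : j.+1 = N.

Lemma jN : (j < N)%N. Proof. by rewrite -HN. Qed.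
Lemma jN' : (j.+1 <= N)%N. Proof. by rewrite -HN. Qed.

Definition stepF c := fP j.+1 c.
Definition stepE c := eP j.+1 c.
Definition InX c := exists t, kpow f i t b = Some (get c j).

Lemma ep_kpow t x : kpow f i t b = Some x -> ep x = (ep b + t)%N.
Proof.
elim: t x => [|t IH] x; first by move=> [<-]; rewrite addn0.
rewrite kpowS; case h: (kpow f i t b) => [z|] //= fz.
by rewrite (f_eps fz) (IH _ h) addnS.
Qed.

Lemma wt_kpow t x : kpow f i t b = Some x -> wt x = wt b - cl (alpha i0 a i) *+ t.
Proof.
elim: t x => [|t IH] x; first by move=> [<-]; rewrite subr0.
rewrite kpowS; case h: (kpow f i t b) => [z|] //= fz.
by rewrite (f_wt fz) (IH _ h) mulrS opprD addrA [_ - cl _]addrAC.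
Qed.

Lemma InX_ep c : InX c -> (ep b <= ep (get c j))%N.
Proof. by case=> t /ep_kpow ->; rewrite leq_addr. Qed.

Lemma epsP_ge n c : (ep (get c n) <= epsP n.+1 c)%N.
Proof. by rewrite /= leq_addr. Qed.

Lemma stepF_X c c' : InX c -> stepF c = Some c' -> InX c'.
Proof.
case=> t ht; rewrite /stepF /=; case: ifP => hc.
  case hx: (f i (get c j)) => [x|] //= [<-].
  by exists t.+1; rewrite get_set_eq ?jN // kpowS ht /= hx.
by move=> h; exists t; rewrite (fP_frame h (leqnn _)).
Qed.

Lemma stepE_X c c' : InX c -> (ep b < epsP j.+1 c)%N -> stepE c = Some c' -> InX c'.
Proof.
case=> t ht hlt; rewrite /stepE /=; case: ifP => hc.
  case hx: (e i (get c j)) => [x|] //= [<-].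
  have := ep_kpow ht; move: hlt => /=; rewrite (_ : (epsP j c - ph (get c j))%N = 0%N); last by lia.
  case: t ht => [|t] ht; first by lia.
  move: ht; rewrite kpowS; case hz: (kpow f i t b) => [z|] //= fz _ _.
  exists t; rewrite get_set_eq ?jN //; move: (proj1 (fe _ _) fz); rewrite hx => -> //.
by move=> h; exists t; rewrite (eP_frame h (leqnn _)).
Qed.

Definition iterF k c := iter k (obind stepF) (Some c).
Definition iterE k c := iter k (obind stepE) (Some c).

Definition i0b : int := if i == i0 then 1 else 0.

Lemma step_energy c c1 : stepF c = Some c1 ->
  Epath j.+1 c1 = Epath j.+1 c + i0b * (1 - (j.+1)%:Z * ((ep (get c1 j))%:Z - (ep (get c j))%:Z)).
Proof.
move=> h; rewrite (fP_energy jN h) (fP_head jN h) /i0b.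
case: (epsP j c < ph (get c j))%N; case: (i == i0); rewrite ?mul0r ?mul1r //=; lia.
Qed.

Lemma iterF_spec k c : InX c -> (k <= phiP j.+1 c)%N -> exists c', iterF k c = Some c' /\
  [/\ iterE k c' = Some c, InX c', epsP j.+1 c' = (epsP j.+1 c + k)%N,
       phiP j.+1 c' = (phiP j.+1 c - k)%N & wtP c' = wtP c - cl (alpha i0 a i) *+ k] /\
       Epath j.+1 c' = Epath j.+1 c + i0b * (k%:Z - (j.+1)%:Z * ((ep (get c' j))%:Z - (ep (get c j))%:Z)).
Proof.
elim: k c => [|k IH] c hX hk.
  by exists c; split => //; split; first split; rewrite ?addn0 ?subn0 ?subr0 ?subrr ?mulr0 ?addr0.
have [c1 h1] : exists c1, stepF c = Some c1.
  by case h: (stepF c) => [c1|]; [exists c1 | have := fP_some (n:=j.+1) (c:=c); rewrite /stepF in h; rewrite h; move=> /(_ _ erefl) //; lia].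
have [s1 s2 s3 s4] := fP_spec jN' h1.
have [c' [h' [[t1 t2 t3 t4 t5] t6]]] := IH c1 (stepF_X hX h1) (ltac:(lia)).
exists c'; split; first by rewrite /iterF iterSr /= h1.
split; first split => //.
- by move: t1; rewrite /iterE /= => ->.
- by rewrite t3 s2; lia.
- by rewrite t4 s3; lia.
- by rewrite t5 (fP_wt jN' h1) mulrS opprD addrA.
rewrite t6 (step_energy h1); rewrite /i0b; case: (i == i0); rewrite ?mul0r ?mul1r ?addr0 //.
rewrite -(addn1 k) PoszD; ring.
Qed.

Lemma iterE_spec k c : InX c -> (k + ep b <= epsP j.+1 c)%N -> exists c', iterE k c = Some c' /\
  [/\ iterF k c' = Some c, InX c', epsP j.+1 c' = (epsP j.+1 c - k)%N,
       phiP j.+1 c' = (phiP j.+1 c + k)%N & wtP c' = wtP c + cl (alpha i0 a i) *+ k] /\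
       Epath j.+1 c' = Epath j.+1 c + i0b * (- k%:Z - (j.+1)%:Z * ((ep (get c' j))%:Z - (ep (get c j))%:Z)).
Proof.
elim: k c => [|k IH] c hX hk.
  by exists c; split => //; split; first split; rewrite ?addn0 ?subn0 ?addr0 ?subrr ?mulr0 ?addr0.
have [c1 h1] : exists c1, stepE c = Some c1.
  by case h: (stepE c) => [c1|]; [exists c1 | have := eP_some (n:=j.+1) (c:=c); rewrite /stepE in h; rewrite h; move=> /(_ _ erefl) //; lia].
have [s1 s2 s3 s4] := eP_spec jN' h1.
have [c' [h' [[t1 t2 t3 t4 t5] t6]]] := IH c1 (stepE_X hX (ltac:(lia)) h1) (ltac:(lia)).
exists c'; split; first by rewrite /iterE iterSr /= h1.
have e1 := step_energy s1.
split; first split => //.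
- by move: t1; rewrite /iterF /= => ->.
- by rewrite t3 s2; lia.
- by rewrite t4 s3; lia.
- by rewrite t5 (eP_wt jN' h1) mulrS addrA.
rewrite t6 e1; rewrite /i0b; case: (i == i0); rewrite ?mul0r ?mul1r ?addr0 //.
rewrite -(addn1 k) PoszD; ring.
Qed.


Definition dd c : int := (phiP j.+1 c)%:Z - (epsP j.+1 c)%:Z + (ep b)%:Z.
Definition sig c : path :=
  odflt c (match dd c with Posz k => iterF k c | Negz k => iterE k.+1 c end).

Lemma sig_spec c : InX c ->
  [/\ InX (sig c), sig (sig c) = c, wtP (sig c) = wtP c - cl (alpha i0 a i) *~ dd c &
      Epath j.+1 (sig c) = Epath j.+1 c +
        i0b * (dd c - (j.+1)%:Z * ((ep (get (sig c) j))%:Z - (ep (get c j))%:Z))].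
Proof.
move=> hX; have he : (ep b <= epsP j.+1 c)%N.
  by apply: leq_trans (InX_ep hX) (epsP_ge _ _).
rewrite /sig; case hd: (dd c) => [k|k].
  have hk : (k <= phiP j.+1 c)%N by move: hd; rewrite /dd; lia.
  have [c' [h' [[t1 t2 t3 t4 t5] t6]]] := iterF_spec hX hk.
  rewrite h' /=; split => //.
  - have hd' : dd c' = - k%:Z by rewrite /dd t3 t4; move: hd; rewrite /dd; lia.
    rewrite hd'; case: k hd hk h' t1 t3 t4 t5 t6 hd' => [|k] hd hk h' t1 t3 t4 t5 t6 hd' /=.
      by move: t1; rewrite /iterE /= => -[->].
    by move: t1; rewrite /iterE /= => ->.
have hk : (k.+1 + ep b <= epsP j.+1 c)%N by move: hd; rewrite /dd NegzE; lia.
have [c' [h' [[t1 t2 t3 t4 t5] t6]]] := iterE_spec hX hk.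
rewrite h' /=; split => //.
- have hd' : dd c' = (k.+1)%:Z by rewrite /dd t3 t4; move: hd; rewrite /dd NegzE; lia.
  by rewrite hd' t1.
- by rewrite t5 NegzE mulrNz opprK pmulrn.
Qed.


Definition bt t := odflt b (kpow f i t b).
Definition Y := ('I_(ph b).+1 * {ffun 'I_j -> B})%type.
Definition toP (y : Y) : path := [ffun o : 'I_N => chain y.2 (bt y.1) o].
Definition fromP (c : path) : Y :=
  (inord (ep (get c j) - ep b), [ffun k : 'I_j => get c k]).
Definition sigY y := fromP (sig (toP y)).

Lemma chain_lt (s : {ffun 'I_j -> B}) x n (h : (n < j)%N) : chain s x n = s (Ordinal h).
Proof. by rewrite /chain insubT. Qed.

Lemma chain_j (s : {ffun 'I_j -> B}) x : chain s x j = x.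
Proof. by rewrite /chain insubF // ltnn. Qed.

Lemma get_toP y l : (l < N)%N -> get (toP y) l = chain y.2 (bt y.1) l.
Proof. by move=> h; rewrite (_ : l = Ordinal h) // get_ord ffunE. Qed.

Lemma bt_kpow t : (t <= ph b)%N -> kpow f i t b = Some (bt t).
Proof. by move=> /(proj1 (le_phi b t)); rewrite /bt; case: kpow. Qed.

Lemma head_toP (y : Y) : get (toP y) j = bt y.1.
Proof. by rewrite get_toP ?jN // chain_j. Qed.

Lemma toP_X y : InX (toP y).
Proof. by exists y.1; rewrite head_toP bt_kpow // -ltnS. Qed.

Lemma ep_bt (t : 'I_(ph b).+1) : ep (bt t) = (ep b + t)%N.
Proof. by apply: ep_kpow; apply: bt_kpow; rewrite -ltnS. Qed.

Lemma fromP_toP y : fromP (toP y) = y.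
Proof.
case: y => t s; rewrite /fromP head_toP ep_bt addKn inord_val; congr (_, _).
apply/ffunP => k; rewrite ffunE get_toP /=; last by rewrite -HN ltnS ltnW.
by rewrite chain_lt; congr (s _); apply: val_inj.
Qed.

Lemma toP_fromP c : InX c -> toP (fromP c) = c.
Proof.
case=> t ht; have htm : (t <= ph b)%N by apply/(proj2 (le_phi b t)); rewrite ht.
apply/ffunP => o; rewrite ffunE /=.
case: (ltnP o j) => ho.
  by rewrite chain_lt ffunE get_ord.
have oj : nat_of_ord o = j by have := ltn_ord o; have := HN; lia.
have -> : c o = get c j by rewrite -oj get_ord.
have -> : forall x s', chain s' x o = chain s' x j by move=> x s'; rewrite oj.
rewrite chain_j (ep_kpow ht) addKn /bt inordK ?ltnS // ht //.
Qed.


Lemma sigYK : involutive sigY.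
Proof.
move=> y; have [X1 X2 _ _] := sig_spec (toP_X y).
by rewrite /sigY toP_fromP // X2 fromP_toP.
Qed.

Lemma sumN (G : nmodType) (F : nat -> G) : \sum_(l < N) F l = \sum_(l < j.+1) F l.
Proof. by rewrite -!(big_mkord xpredT) HN. Qed.

Lemma wt_toP (y : Y) : wtP (toP y) = \sum_(k < j) wt (y.2 k) + wt (bt y.1).
Proof.
rewrite -wtP_get (sumN (fun l => wt (get (toP y) l))) big_ord_recr /= head_toP; congr (_ + _).
apply: eq_bigr => k _ /=; rewrite get_toP; last by rewrite -HN ltnS ltnW.
by rewrite chain_lt; congr (wt (y.2 _)); apply: val_inj.
Qed.

Lemma E_toP (y : Y) : energyE H (bt y.1) y.2 = Epath j.+1 (toP y).
Proof.
rewrite /energyE /Epath /=; apply: eq_bigr => k _.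
by rewrite !get_toP // -HN ltnS // ltnW.
Qed.

Hypothesis Haii : a i i = 2.

Lemma dd_toP (y : Y) : dd (toP y) =
  (\sum_(k < j) wt (y.2 k)) i + (ph b)%:Z - 2 * (y.1)%:Z.
Proof.
rewrite /dd phi_eps_wt -(sumN (fun l => wt (get (toP y) l))) wtP_get wt_toP ffunE.
rewrite (wt_kpow (bt_kpow _)); last by rewrite -ltnS.
rewrite !ffunE ffunMnE ffunE Haii -wt_i ; ring.
Qed.


Lemma core (mu : wlat I) (y : Y) :
  let y' := sigY y in
  let m := ph b in
  ((\sum_(k < j) wt (y.2 k) == cl (mu + alpha i0 a i *~ (y.1)%:Z)) =
   (\sum_(k < j) wt (y'.2 k) == cl (refl i0 a i (mu + alpha i0 a i *~ (m%:Z - (y'.1)%:Z)))))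
  /\ ((\sum_(k < j) wt (y.2 k) == cl (mu + alpha i0 a i *~ (y.1)%:Z)) ->
     delta_coef (mu + alpha i0 a i *~ (y.1)%:Z) + energyE H (bt y.1) y.2
       + (y.1 * j * (i == i0))%N%:Z =
     delta_coef (refl i0 a i (mu + alpha i0 a i *~ (m%:Z - (y'.1)%:Z)))
       + energyE H (bt y'.1) y'.2 + (y'.1 * j * (i == i0))%N%:Z).
Proof.
move=> y' m.
have hX := toP_X y; have [X1 X2 X3 X4] := sig_spec hX.
have ty' : toP y' = sig (toP y) := toP_fromP X1.
clearbody y'; rewrite /m; clear m.
have eD := dd_toP y.
set D := dd (toP y) in X3 X4 eD.
set S := \sum_(k < j) wt (y.2 k) in eD *.
set S' := \sum_(k < j) wt (y'.2 k).
set v := cl (alpha i0 a i) in X3.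
have vi : v i = 2 by rewrite /v /cl /alpha /= ffunE Haii.
have hS' : forall x, S' x = S x + v x * ((y'.1)%:Z - (y.1)%:Z - D).
  move=> x; have e1 := wt_toP y'; rewrite ty' X3 wt_toP in e1.
  have w1 : (y.1 <= ph b)%N by rewrite -ltnS.
  have w2 : (y'.1 <= ph b)%N by rewrite -ltnS.
  rewrite (wt_kpow (bt_kpow w1)) (wt_kpow (bt_kpow w2)) in e1.
  rewrite -/S -/S' -/v in e1.
  move: e1 vi; clearbody S S' v D => e1 _.
  have e2 := congr1 (fun F : {ffun I -> int} => F x) e1.
  rewrite /= !ffDE !ffNE !ffunMzE !ffunMnE (pmulrn (v x) y.1) (pmulrn (v x) y'.1) !mulrzz in e2.
  rewrite -[S' x](addrK (wt b x - v x * (y'.1)%:Z)) -e2; ring.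
have cL : forall z, cl (mu + alpha i0 a i *~ z) = mu.1 + v *~ z.
  by move=> z; rewrite /cl /= fst_mulz.
have cR : cl (refl i0 a i (mu + alpha i0 a i *~ ((ph b)%:Z - (y'.1)%:Z))) =
   mu.1 + v *~ ((ph b)%:Z - (y'.1)%:Z) - v *~ (mu.1 i + 2 * ((ph b)%:Z - (y'.1)%:Z)).
  rewrite /refl /pair_h /cl /= !fst_mulz; congr (_ + _ - _ *~ _).
  by rewrite ffDE ffunMzE mulrzz -/v vi.
have [A1 A2] := alg vi (erefl (mu.1 i)) eD hS'.
rewrite cL cR; split; first exact: A1.
move=> /A2 hD.
rewrite !E_toP ty' X4 !head_toP -ty' head_toP !ep_bt hD.
have a2 : (alpha i0 a i).2 = i0b by [].
rewrite /refl /delta_coef /pair_h !sndB !sndD !snd_mulz a2 fstD fst_mulz ffDE ffunMzE mulrzz -/v vi.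
clearbody S S' v D.
rewrite /i0b; case hi: (i == i0); rewrite ?hi !PoszD ?PoszM /= !mulrzz; ring.
Qed.

Lemma qvar_neq0 : qvar != 0.
Proof. by rewrite /qvar tofrac_eq0 polyX_eq0. Qed.

Lemma sum_form (nu : nat -> wlat I) :
  \sum_(t < (ph b).+1) gopt qvar wt H j (kpow f i t b) (nu t) * qvar ^+ (t * j * (i == i0)) =
  \sum_(y : Y) (if \sum_(k < j) wt (y.2 k) == cl (nu y.1)
     then qvar ^ (delta_coef (nu y.1) + energyE H (bt y.1) y.2 + (y.1 * j * (i == i0))%N%:Z)
     else 0).
Proof.
rewrite -(pair_bigA _ (fun (t : 'I_(ph b).+1) (s : {ffun 'I_j -> B}) =>
  (if \sum_(k < j) wt (s k) == cl (nu t)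
     then qvar ^ (delta_coef (nu t) + energyE H (bt t) s + (t * j * (i == i0))%N%:Z)
     else 0))).
apply: eq_bigr => t _.
rewrite bt_kpow; last by rewrite -ltnS.
rewrite /gopt /gfun big_mkcond mulr_sumr mulr_suml; apply: eq_bigr => s _.
case: ifP => _; last by rewrite mulr0 mul0r.
by rewrite exprnP !expfzDr ?qvar_neq0.
Qed.

Lemma final (mu : wlat I) :
  \sum_(t < (ph b).+1)
     gopt qvar wt H j (kpow f i t b) (mu + alpha i0 a i *~ t%:Z)
       * qvar ^+ (t * j * (i == i0))
  = \sum_(t < (ph b).+1)
     gopt qvar wt H j (kpow f i t b)
       (refl i0 a i (mu + alpha i0 a i *~ ((ph b)%:Z - t%:Z)))
       * qvar ^+ (t * j * (i == i0)).
Proof.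
rewrite (sum_form (fun t => mu + alpha i0 a i *~ t%:Z)).
rewrite (sum_form (fun t => refl i0 a i (mu + alpha i0 a i *~ ((ph b)%:Z - t%:Z)))).
rewrite [RHS](reindex_inj (can_inj sigYK)).
apply: eq_bigr => y _.
have [C1 C2] := core mu y.
rewrite /= -C1; case: ifP => // hc.
by rewrite (C2 hc).
Qed.

End Main.

Unset Implicit Arguments.

Theorem mainTheorem6 (I : finType) (i0 : I) (a : I -> I -> int)
  (B : finType) (wt : B -> {ffun I -> int}) (e f : I -> B -> option B)
  (eps phi : I -> B -> nat) (H : B -> B -> int) :
  affine_cartan a ->
  is_crystal i0 a wt e f eps phi ->
  energy_function i0 e eps phi H ->
  forall (b : B) (i : I) (j : nat) (mu : wlat I),
  let m := phi i b in
  \sum_(t < m.+1)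
     gopt qvar wt H j (kpow f i t b) (mu + alpha i0 a i *~ t%:Z)
       * qvar ^+ (t * j * (i == i0))
  = \sum_(t < m.+1)
     gopt qvar wt H j (kpow f i t b)
       (refl i0 a i (mu + alpha i0 a i *~ (m%:Z - t%:Z)))
       * qvar ^+ (t * j * (i == i0)).
Proof.
move=> hA hC hE b i j mu m.
have Haii : a i i = 2 by case: hA.
exact: (@final I i0 a B wt e f eps phi H hC hE i j.+1 b b j erefl Haii mu).
Qed.
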